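(* Let $\Gamma$ be a finite ordinal potential game with profile set $S$. A state $s^*\in S$ is strongly maximal if and only if there is no advancement path in the ordinal deployment graph of $\Gamma$ whose first vertex is $s^*$.
   Context: A finite strategic-form game $\Gamma=(I,(S_i)_{i\in I},(u_i)_{i\in I})$ has finite player set $I$, finite nonempty strategy sets $S_i$, utilities $u_i:S\to\mathbb{R}$, $S=\prod_i S_i$; $(s_i',s_{-i})$ denotes $s$ with player $i$'s strategy replaced by $s_i'$. A function $P:S\to\mathbb{R}$ is an ordinal potential if for all $i$, $a,b\in S_i$, $\sigma_{-i}\in S_{-i}$: $u_i(a,\sigma_{-i})>u_i(b,\sigma_{-i})\iff P(a,\sigma_{-i})>P(b,\sigma_{-i})$; $\Gamma$ is an ordinal potential game if one exists. The ordinal deployment graph has vertex set $S$ and an arc $(s,s')$, $s'\neq s$, iff $s'=(s_i',s_{-i})$ for some $i$ with $u_i(s')\ge u_i(s)$; the arc is positive if $u_i(s')>u_i(s)$ and neutral otherwise. An advancement path is a directed path in the ordinal deployment graph containing at least one positive arc. Define $s\succeq s'$ iff there is a directed path (possibly of length $0$) from $s'$ to $s$, and $s\succ s'$ iff $s\succeq s'$ and not $s'\succeq s$. A state $s^*$ is strongly maximal if there is no $s$ with $s\succ s^*$. *)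

(* Defs.v *)
From HB Require Import structures.
From mathcomp Require Import all_boot all_order all_algebra.
Set Implicit Arguments. Unset Strict Implicit. Unset Printing Implicit Defensive.
Import Order.TTheory GRing.Theory Num.Theory.
Local Open Scope ring_scope.

Definition profile (I : finType) (S : I -> finType) : finType :=
  {dffun forall i : I, S i}.

Section Game.
Variables (R : realFieldType) (I : finType) (S : I -> finType).
Variable u : I -> profile S -> R.

Definition dev (i : I) (s t : profile S) : bool :=
  [forall j, (j != i) ==> (s j == t j)].

Definition ordinal_potential (P : profile S -> R) : Prop :=
  forall (i : I) (s t : profile S), dev i s t ->
    (u i s > u i t <-> P s > P t).

Definition arc (s t : profile S) : bool :=
  (t != s) && [exists i, dev i s t && (u i s <= u i t)].
Definition pos_arc (s t : profile S) : bool :=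
  (t != s) && [exists i, dev i s t && (u i s < u i t)].

Definition dpath (x : profile S) (p : seq (profile S)) : bool :=
  path arc x p && uniq (x :: p).

Definition advancement_path (x : profile S) (p : seq (profile S)) : bool :=
  dpath x p && has (fun e => pos_arc e.1 e.2) (zip (x :: p) p).

(* s ⪰ s' : a directed path (possibly of length 0) from s' to s *)
Definition succeq (s s' : profile S) : Prop :=
  exists p, dpath s' p /\ last s' p = s.
Definition succ (s s' : profile S) : Prop := succeq s s' /\ ~ succeq s' s.
Definition strongly_maximal (s : profile S) : Prop := ~ exists t, succ t s.

End Game.

(* Main.v *)
Require Import Defs.
From HB Require Import structures.
From mathcomp Require Import all_boot all_order all_algebra.
Import Order.TTheory GRing.Theory Num.Theory.
Local Open Scope ring_scope.

Section H.
Variables (R : realFieldType) (I : finType) (S : I -> finType).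
Variable u : I -> profile S -> R.

Lemma devC i (s t : profile S) : dev i s t -> dev i t s.
Proof.
move=> /forallP H; apply/forallP=> j; apply/implyP=> Hj.
by have := implyP (H j) Hj; rewrite eq_sym.
Qed.

Lemma arc_rev (a b : profile S) : Defs.arc u a b -> ~~ pos_arc u a b -> Defs.arc u b a.
Proof.
case/andP=> Hne /existsP [i /andP [Hd Hle]].
rewrite /pos_arc Hne /= negb_exists => /forallP /(_ i).
rewrite Hd /= -leNgt => Hge.
apply/andP; split; first by rewrite eq_sym.
by apply/existsP; exists i; rewrite (devC _ _ _ Hd).
Qed.

Variable P : profile S -> R.
Hypothesis HP : ordinal_potential u P.

Lemma arc_P (a b : profile S) : Defs.arc u a b -> P a <= P b.
Proof.
case/andP=> _ /existsP [i /andP [Hd Hle]].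
rewrite leNgt; apply/negP => /(proj2 (HP i a b Hd)).
by rewrite ltNge Hle.
Qed.

Lemma pos_P (a b : profile S) : pos_arc u a b -> P a < P b.
Proof.
case/andP=> _ /existsP [i /andP [Hd Hlt]].
exact: (proj1 (HP i b a (devC _ _ _ Hd))).
Qed.

Lemma path_P (x : profile S) p : path (Defs.arc u) x p -> P x <= P (last x p).
Proof.
elim: p x => [|y p IH] x /=; first by [].
case/andP=> Ha Hp; have h1 := arc_P _ _ Ha; have h2 := IH y Hp; exact: le_trans h1 h2.
Qed.

Lemma path_Ppos (x : profile S) p : path (Defs.arc u) x p ->
  has (fun e => pos_arc u e.1 e.2) (zip (x :: p) p) -> P x < P (last x p).
Proof.
elim: p x => [|y p IH] x //=.
case/andP=> Ha Hp /orP [Hpos|Hh].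
  exact: lt_le_trans (pos_P _ _ Hpos) (path_P _ _ Hp).
exact: le_lt_trans (arc_P _ _ Ha) (IH y Hp Hh).
Qed.
End H.

Lemma path_rev_neutral (R : realFieldType) (I : finType) (S : I -> finType)
  (u : I -> profile S -> R) (x : profile S) p : path (Defs.arc u) x p ->
  ~~ has (fun e => pos_arc u e.1 e.2) (zip (x :: p) p) ->
  path [rel a b | Defs.arc u b a] x p.
Proof.
elim: p x => [|y p IH] x //=.
case/andP=> Ha Hp; rewrite negb_or => /andP [Hn Hh].
by rewrite (@arc_rev _ _ _ u _ _ Ha Hn) IH.
Qed.

Lemma last_rev_belast (T : Type) (x : T) p : last (last x p) (rev (belast x p)) = x.
Proof.
case: p => [|y q] //=.
by rewrite rev_cons last_rcons.
Qed.

Theorem lemma1 (R : realFieldType) (I : finType) (S : I -> finType)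
  (HS : forall i : I, (0 < #|S i|)%N) (u : I -> profile S -> R)
  (Hpot : exists P : profile S -> R, ordinal_potential u P)
  (s : profile S) :
  strongly_maximal u s <-> ~ (exists p : seq (profile S), advancement_path u s p).
Proof.
have [P HP] := Hpot.
split.
  move=> Hm [p /andP [Hd Hh]]; apply: Hm; exists (last s p); split.
    by exists p.
  case=> q [/andP [Hq _] Hl].
  have h1 := @path_Ppos _ _ _ u P HP _ _ (proj1 (andP Hd)) Hh.
  have h2 := @path_P _ _ _ u P HP _ _ Hq; rewrite Hl in h2.
  by move: (lt_le_trans h1 h2); rewrite ltxx.
move=> Hn [t [[p [Hd Hl]] Hns]].
case Hh: (has (fun e => pos_arc u e.1 e.2) (zip (s :: p) p)).
  by apply: Hn; exists p; rewrite /advancement_path Hd Hh.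
apply: Hns; exists (rev (belast s p)); split; last first.
  by rewrite -Hl last_rev_belast.
case/andP: Hd => Hp Hu.
rewrite -Hl /dpath rev_path (@path_rev_neutral _ _ _ u _ _ Hp) ?Hh //=.
by rewrite mem_rev rev_uniq -rcons_uniq -lastI.
Qed.
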